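(* Let $I=[-1,1]$ be a parametrised interval object in a category $\mathcal{C}$ with finite products, with negation $-\colon I\to I$ (the unique midpoint endomorphism with $-(1)=-1$, $-(-1)=1$) and $0=-1\oplus 1$. Then there is a unique map $(x,y)\mapsto x\cdot y\colon I\times I\to I$ such that $x\cdot(-1)=-x$, $x\cdot 1=x$ and $x\cdot(y\oplus z)=(x\cdot y)\oplus(x\cdot z)$. Moreover, this map satisfies $x\cdot 0=0$, $x\cdot y=y\cdot x$ and $(x\cdot y)\cdot z=x\cdot(y\cdot z)$.
   Context: Equations are between generalised elements. A midpoint object is $(A,m)$ with $m\colon A\times A\to A$ satisfying $m(x,x)=x$, $m(x,y)=m(y,x)$, $m(m(x,y),m(z,w))=m(m(x,z),m(y,w))$; cancellative if $m(x,y)=m(x,z)$ implies $y=z$; iterative if for every $c\colon X\to A\times X$ there is a unique $u\colon X\to A$ with $m\circ(\mathrm{id}\times u)\circ c=u$. An m-convex body is a cancellative iterative midpoint object. A parametrised interval object is an m-convex body $(I,\oplus)$ with global points $a,b$ (here $-1,1$) such that for every object $P$, every m-convex body $(A,m)$ and maps $x_a,x_b\colon P\to A$ there is a unique map $h\colon P\times I\to A$ with $h(p,a)=x_a(p)$, $h(p,b)=x_b(p)$ and $h(p,x\oplus y)=m(h(p,x),h(p,y))$. *)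

(* Defs.v *)
(* Equations are stated between
   generalised elements (morphisms X -> A for arbitrary X). *)

Set Implicit Arguments.
Unset Strict Implicit.

Record FPCat := {
  Ob : Type;
  Hom : Ob -> Ob -> Type;
  cid : forall A, Hom A A;
  comp : forall A B C, Hom B C -> Hom A B -> Hom A C;
  comp_id_l : forall A B (f : Hom A B), comp (cid B) f = f;
  comp_id_r : forall A B (f : Hom A B), comp f (cid A) = f;
  comp_assoc : forall A B C D (h : Hom C D) (g : Hom B C) (f : Hom A B),
      comp h (comp g f) = comp (comp h g) f;
  one : Ob;
  bang : forall A, Hom A one;
  bang_unique : forall A (f : Hom A one), f = bang A;
  prd : Ob -> Ob -> Ob;
  p1 : forall A B, Hom (prd A B) A;
  p2 : forall A B, Hom (prd A B) B;
  pair : forall X A B, Hom X A -> Hom X B -> Hom X (prd A B);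
  pair_p1 : forall X A B (f : Hom X A) (g : Hom X B), comp (p1 A B) (pair f g) = f;
  pair_p2 : forall X A B (f : Hom X A) (g : Hom X B), comp (p2 A B) (pair f g) = g;
  pair_unique : forall X A B (h : Hom X (prd A B)),
      h = pair (comp (p1 A B) h) (comp (p2 A B) h)
}.

Arguments Hom f _ _ : clear implicits, rename.
Arguments cid {f} A : rename.
Arguments comp {f A B C} _ _ : rename.
Arguments one {f} : rename.
Arguments bang {f} A : rename.
Arguments prd {f} _ _ : rename.
Arguments p1 {f} A B : rename.
Arguments p2 {f} A B : rename.
Arguments pair {f X A B} _ _ : rename.

Section Defs.
Variable C : FPCat.

Definition app2 {X A B D : Ob C} (m : Hom C (prd A B) D) (x : Hom C X A) (y : Hom C X B)
  : Hom C X D := comp m (pair x y).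

Definition cst {X A : Ob C} (a : Hom C one A) : Hom C X A := comp a (bang X).

Definition is_midpoint (A : Ob C) (m : Hom C (prd A A) A) : Prop :=
  (forall X (x : Hom C X A), app2 m x x = x) /\
  (forall X (x y : Hom C X A), app2 m x y = app2 m y x) /\
  (forall X (x y z w : Hom C X A),
      app2 m (app2 m x y) (app2 m z w) = app2 m (app2 m x z) (app2 m y w)).

Definition is_cancellative (A : Ob C) (m : Hom C (prd A A) A) : Prop :=
  forall X (x y z : Hom C X A), app2 m x y = app2 m x z -> y = z.

(* id x u : A x X -> A x A *)
Definition is_iterative (A : Ob C) (m : Hom C (prd A A) A) : Prop :=
  forall X (c : Hom C X (prd A X)),
    exists! u : Hom C X A,
      comp m (comp (pair (p1 A X) (comp u (p2 A X))) c) = u.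

Definition is_mconvex (A : Ob C) (m : Hom C (prd A A) A) : Prop :=
  is_midpoint m /\ is_cancellative m /\ is_iterative m.

Definition is_midpoint_hom {A B : Ob C} (mA : Hom C (prd A A) A) (mB : Hom C (prd B B) B)
  (f : Hom C A B) : Prop :=
  forall X (x y : Hom C X A), comp f (app2 mA x y) = app2 mB (comp f x) (comp f y).

Definition is_param_interval (I : Ob C) (oplus : Hom C (prd I I) I)
  (a b : Hom C one I) : Prop :=
  is_mconvex oplus /\
  forall (P A : Ob C) (m : Hom C (prd A A) A), is_mconvex m ->
  forall (xa xb : Hom C P A),
    exists! h : Hom C (prd P I) A,
      (forall X (p : Hom C X P), app2 h p (cst a) = comp xa p) /\
      (forall X (p : Hom C X P), app2 h p (cst b) = comp xb p) /\
      (forall X (p : Hom C X P) (x y : Hom C X I),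
          app2 h p (app2 oplus x y) = app2 m (app2 h p x) (app2 h p y)).

Definition is_mult (I : Ob C) (oplus : Hom C (prd I I) I) (a b : Hom C one I)
  (neg : Hom C I I) (mul : Hom C (prd I I) I) : Prop :=
  (forall X (x : Hom C X I), app2 mul x (cst a) = comp neg x) /\
  (forall X (x : Hom C X I), app2 mul x (cst b) = x) /\
  (forall X (x y z : Hom C X I),
      app2 mul x (app2 oplus y z) = app2 oplus (app2 mul x y) (app2 mul x z)).

End Defs.

(* Main.v *)
Require Import Defs.

Section Gen.
Variable C : FPCat.

Lemma comp_assocR (A B D E : Ob C) (h : Hom C D E) (g : Hom C B D) (f : Hom C A B) :
  comp (comp h g) f = comp h (comp g f).
Proof. symmetry; apply comp_assoc. Qed.

Lemma comp_pair (X Y A B : Ob C) (f : Hom C Y A) (g : Hom C Y B) (h : Hom C X Y) :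
  comp (pair f g) h = pair (comp f h) (comp g h).
Proof.
  rewrite (pair_unique (comp (pair f g) h)), !comp_assoc, pair_p1, pair_p2; reflexivity.
Qed.

Lemma bang_comp (X Y : Ob C) (f : Hom C X Y) : comp (bang Y) f = bang X.
Proof. apply bang_unique. Qed.

Lemma bang_one : bang (@one C) = cid one.
Proof. symmetry; apply bang_unique. Qed.
End Gen.

Ltac simp := repeat progress (rewrite ?comp_assocR, ?comp_pair, ?pair_p1, ?pair_p2,
  ?comp_id_l, ?comp_id_r, ?bang_comp).

Section Main.
Variable C : FPCat.
Variable I : Ob C.
Variables (oplus : Hom C (prd I I) I) (a b : Hom C one I) (neg : Hom C I I).
Hypothesis Hconv : is_mconvex oplus.
Hypothesis HU : forall (P A : Ob C) (m : Hom C (prd A A) A), is_mconvex m ->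
  forall (xa xb : Hom C P A),
    exists! h : Hom C (prd P I) A,
      (forall X (p : Hom C X P), app2 h p (cst a) = comp xa p) /\
      (forall X (p : Hom C X P), app2 h p (cst b) = comp xb p) /\
      (forall X (p : Hom C X P) (x y : Hom C X I),
          app2 h p (app2 oplus x y) = app2 m (app2 h p x) (app2 h p y)).
Hypothesis Hneg_hom : forall X (x y : Hom C X I),
  comp neg (comp oplus (pair x y)) = comp oplus (pair (comp neg x) (comp neg y)).
Hypothesis Hneg_a : comp neg a = b.
Hypothesis Hneg_b : comp neg b = a.
Hypothesis Hneg_unique : forall f : Hom C I I,
      is_midpoint_hom oplus oplus f -> comp f a = b -> comp f b = a -> f = neg.
Variable mul : Hom C (prd I I) I.
Hypothesis Ma : forall X (x : Hom C X I), comp mul (pair x (comp a (bang X))) = comp neg x.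
Hypothesis Mb : forall X (x : Hom C X I), comp mul (pair x (comp b (bang X))) = x.
Hypothesis Ml : forall X (x y z : Hom C X I),
  comp mul (pair x (comp oplus (pair y z))) =
  comp oplus (pair (comp mul (pair x y)) (comp mul (pair x z))).

Lemma Hidem : forall X (x : Hom C X I), comp oplus (pair x x) = x.
Proof. destruct Hconv as [[H _] _]; exact H. Qed.
Lemma Hcomm : forall X (x y : Hom C X I), comp oplus (pair x y) = comp oplus (pair y x).
Proof. destruct Hconv as [[_ [H _]] _]; exact H. Qed.
Lemma Hmed : forall X (x y z w : Hom C X I),
  comp oplus (pair (comp oplus (pair x y)) (comp oplus (pair z w))) =
  comp oplus (pair (comp oplus (pair x z)) (comp oplus (pair y w))).
Proof. destruct Hconv as [[_ [_ H]] _]; exact H. Qed.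

Lemma Na X (k : Hom C X one) : comp neg (comp a k) = comp b k.
Proof. rewrite comp_assoc, Hneg_a; reflexivity. Qed.
Lemma Nb X (k : Hom C X one) : comp neg (comp b k) = comp a k.
Proof. rewrite comp_assoc, Hneg_b; reflexivity. Qed.

Lemma U : forall P (h1 h2 : Hom C (prd P I) I),
  (forall X (p : Hom C X P), comp h1 (pair p (comp a (bang X))) = comp h2 (pair p (comp a (bang X)))) ->
  (forall X (p : Hom C X P), comp h1 (pair p (comp b (bang X))) = comp h2 (pair p (comp b (bang X)))) ->
  (forall X (p : Hom C X P) (x y : Hom C X I), comp h1 (pair p (comp oplus (pair x y))) =
     comp oplus (pair (comp h1 (pair p x)) (comp h1 (pair p y)))) ->
  (forall X (p : Hom C X P) (x y : Hom C X I), comp h2 (pair p (comp oplus (pair x y))) =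
     comp oplus (pair (comp h2 (pair p x)) (comp h2 (pair p y)))) ->
  forall X (p : Hom C X P) (y : Hom C X I), comp h1 (pair p y) = comp h2 (pair p y).
Proof.
  intros P h1 h2 Ha Hb L1 L2 X p y.
  destruct (HU P I oplus Hconv (comp h1 (pair (cid P) (comp a (bang P))))
             (comp h1 (pair (cid P) (comp b (bang P))))) as [h [_ Huniq]].
  assert (e1 : h = h1).
  { apply Huniq. unfold app2, cst. split; [|split]; intros; simp; try reflexivity.
    apply L1. }
  assert (e2 : h = h2).
  { apply Huniq. unfold app2, cst. split; [|split]; intros; simp.
    - rewrite Ha; reflexivity.
    - rewrite Hb; reflexivity.
    - apply L2. }
  rewrite <- e1, <- e2; reflexivity.
Qed.

Ltac crush0 := intros; simp;
  repeat (first [rewrite Ma | rewrite Mb | rewrite Ml | rewrite Na | rewrite Nb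
                 | rewrite Hneg_hom]; simp); try reflexivity.

Lemma LA X (y : Hom C X I) : comp mul (pair (comp a (bang X)) y) = comp neg y.
Proof.
  assert (E : comp mul (pair (comp a (bang I)) (cid I)) = neg).
  { apply Hneg_unique.
    - unfold is_midpoint_hom, app2. crush0.
    - pose proof (Ma one a) as H. rewrite bang_one, comp_id_r in H.
      simp. rewrite bang_one, comp_id_r, H, Hneg_a; reflexivity.
    - pose proof (Mb one a) as H. rewrite bang_one, comp_id_r in H.
      simp. rewrite bang_one, comp_id_r, H; reflexivity. }
  rewrite <- E. simp. reflexivity.
Qed.

Lemma LB X (y : Hom C X I) : comp mul (pair (comp b (bang X)) y) = y.
Proof.
  transitivity (comp (comp mul (pair (comp b (bang (prd one I))) (p2 one I))) (pair (bang X) y));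
    [simp; reflexivity|].
  transitivity (comp (p2 one I) (pair (bang X) y)); [|simp; reflexivity].
  apply U; crush0.
Qed.

Ltac crush1 := intros; simp;
  repeat (first [rewrite Ma | rewrite Mb | rewrite Ml | rewrite Na | rewrite Nb
                 | rewrite Hneg_hom | rewrite LA | rewrite LB]; simp); try reflexivity.

Lemma LC X (x z y : Hom C X I) :
  comp mul (pair (comp oplus (pair x z)) y) =
  comp oplus (pair (comp mul (pair x y)) (comp mul (pair z y))).
Proof.
  pose (q1 := comp (p1 I I) (p1 (prd I I) I)).
  pose (q2 := comp (p2 I I) (p1 (prd I I) I)).
  pose (r := p2 (prd I I) I).
  transitivity (comp (comp mul (pair (comp oplus (pair q1 q2)) r)) (pair (pair x z) y));
    [unfold q1, q2, r; simp; reflexivity|].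
  transitivity (comp (comp oplus (pair (comp mul (pair q1 r)) (comp mul (pair q2 r))))
                  (pair (pair x z) y)); [|unfold q1, q2, r; simp; reflexivity].
  apply U; unfold q1, q2, r; crush1.
  apply Hmed.
Qed.

Lemma NN X (x : Hom C X I) : comp neg (comp neg x) = x.
Proof.
  transitivity (comp (comp neg (comp neg (p2 one I))) (pair (bang X) x)); [simp; reflexivity|].
  transitivity (comp (p2 one I) (pair (bang X) x)); [|simp; reflexivity].
  apply U; crush1.
Qed.

Lemma LG X (x y : Hom C X I) : comp mul (pair x (comp neg y)) = comp neg (comp mul (pair x y)).
Proof.
  transitivity (comp (comp mul (pair (p1 I I) (comp neg (p2 I I)))) (pair x y)); [simp; reflexivity|].
  transitivity (comp (comp neg (comp mul (pair (p1 I I) (p2 I I)))) (pair x y)); [|simp; reflexivity].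
  apply U; crush1; rewrite NN; reflexivity.
Qed.

Ltac crush2 := intros; simp;
  repeat (first [rewrite Ma | rewrite Mb | rewrite Ml | rewrite Na | rewrite Nb
                 | rewrite Hneg_hom | rewrite LA | rewrite LB | rewrite LC
                 | rewrite NN | rewrite LG]; simp); try reflexivity.

Lemma Lzero X (x : Hom C X I) :
  comp mul (pair x (comp (comp oplus (pair a b)) (bang X))) = comp (comp oplus (pair a b)) (bang X).
Proof.
  simp. rewrite Ml, Ma, Mb.
  transitivity (comp (comp oplus (pair (comp neg (p2 one I)) (p2 one I))) (pair (bang X) x));
    [simp; reflexivity|].
  transitivity (comp (comp oplus (pair (comp a (bang (prd one I))) (comp b (bang (prd one I)))))
     (pair (bang X) x)); [|simp; reflexivity].
  apply U; crush2.
  - apply Hcomm.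
  - apply Hmed.
  - symmetry; apply Hidem.
Qed.

Lemma Lcomm X (x y : Hom C X I) : comp mul (pair x y) = comp mul (pair y x).
Proof.
  transitivity (comp (comp mul (pair (p1 I I) (p2 I I))) (pair x y)); [simp; reflexivity|].
  transitivity (comp (comp mul (pair (p2 I I) (p1 I I))) (pair x y)); [|simp; reflexivity].
  apply U; crush2.
Qed.

Lemma Lassoc X (x y z : Hom C X I) :
  comp mul (pair (comp mul (pair x y)) z) = comp mul (pair x (comp mul (pair y z))).
Proof.
  pose (q1 := comp (p1 I I) (p1 (prd I I) I)).
  pose (q2 := comp (p2 I I) (p1 (prd I I) I)).
  pose (r := p2 (prd I I) I).
  transitivity (comp (comp mul (pair (comp mul (pair q1 q2)) r)) (pair (pair x y) z));
    [unfold q1, q2, r; simp; reflexivity|].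
  transitivity (comp (comp mul (pair q1 (comp mul (pair q2 r)))) (pair (pair x y) z));
    [|unfold q1, q2, r; simp; reflexivity].
  apply U; unfold q1, q2, r; crush2.
Qed.

End Main.

Theorem mainTheorem4 (C : FPCat) (I : Ob C) (oplus : Hom C (prd I I) I)
  (a b : Hom C one I) (* a = -1, b = 1 *)
  (HI : is_param_interval oplus a b)
  (neg : Hom C I I)
  (Hneg_hom : is_midpoint_hom oplus oplus neg)
  (Hneg_a : comp neg a = b) (Hneg_b : comp neg b = a)
  (Hneg_unique : forall f : Hom C I I,
      is_midpoint_hom oplus oplus f -> comp f a = b -> comp f b = a -> f = neg) :
  let zero := app2 oplus a b in
  exists mul : Hom C (prd I I) I,
    is_mult oplus a b neg mul /\
    (forall mul', is_mult oplus a b neg mul' -> mul' = mul) /\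
    (forall X (x : Hom C X I), app2 mul x (cst zero) = cst zero) /\
    (forall X (x y : Hom C X I), app2 mul x y = app2 mul y x) /\
    (forall X (x y z : Hom C X I),
        app2 mul (app2 mul x y) z = app2 mul x (app2 mul y z)).
Proof.
  intros zero. destruct HI as [Hconv HU].
  destruct (HU I I oplus Hconv neg (cid I)) as [mul [[Ma [Mb Ml]] Muniq]].
  exists mul.
  assert (Mb' : forall X (x : Hom C X I), comp mul (pair x (comp b (bang X))) = x).
  { intros X x. pose proof (Mb X x) as H. unfold app2, cst in H. rewrite H. apply comp_id_l. }
  unfold app2, cst in Ma, Ml. unfold is_midpoint_hom, app2 in Hneg_hom.
  split; [|split; [|split; [|split]]].
  - split; [|split]; unfold app2, cst; intros.
    + apply Ma.
    + apply Mb'.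
    + apply Ml.
  - intros mul' Hm. symmetry. apply Muniq.
    destruct Hm as [H1 [H2 H3]]. split; [|split]; intros.
    + apply H1.
    + rewrite comp_id_l. apply H2.
    + apply H3.
  - intros X x. unfold app2, cst, zero.
    eapply Lzero; eassumption.
  - intros X x y. unfold app2.
    eapply Lcomm; eassumption.
  - intros X x y z. unfold app2.
    eapply Lassoc; eassumption.
Qed.
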